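(* For all positive integers $\ell$ and $d$, the forwarding index of the BCube network satisfies $$\pi(\mathcal{B}(\ell,d)) = d^{\ell}-d^{\ell-1}.$$
   Context: The BCube $\mathcal{B}(\ell,d)$ ($\ell,d$ positive integers) is the symmetric digraph defined as follows, with $\mathbb{Z}_d=\{0,1,\dots,d-1\}$. - Hosts: all vectors $\mathbf{h}=h_1\cdots h_\ell\in\mathbb{Z}_d^{\ell}$. - Switches: for each layer $k\in\{1,\dots,\ell\}$, one switch $\mathbf{s}^k$ for each vector $s^k_1\cdots s^k_{\ell-1}\in\mathbb{Z}_d^{\ell-1}$. Switches of different layers are distinct vertices. - Links: host $\mathbf{h}$ and layer-$k$ switch $\mathbf{s}^k$ are joined if and only if $s^k_1\cdots s^k_{\ell-1}=h_1\cdots h_{k-1}h_{k+1}\cdots h_\ell$. Each such link gives two arcs, an uplink (host $\to$ switch) and a downlink (switch $\to$ host), both said to be at layer $k$. There are no other arcs. A host-to-host routing $R$ assigns to every ordered pair $(\mathbf{h}^s,\mathbf{h}^d)$ of distinct hosts one directed path $P_{\mathbf{h}^s,\mathbf{h}^d}$ from $\mathbf{h}^s$ to $\mathbf{h}^d$ in $\mathcal{B}(\ell,d)$. The load of an arc is the number of paths of $R$ containing it, and $\pi(\mathcal{B}(\ell,d),R)$ is the maximum load over all arcs. The forwarding index $\pi(\mathcal{B}(\ell,d))$ is the minimum of $\pi(\mathcal{B}(\ell,d),R)$ over all host-to-host routings $R$. *)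

(* Defs.v *)
From mathcomp Require Import all_boot.
Set Implicit Arguments. Unset Strict Implicit. Unset Printing Implicit Defensive.

Section BCube.
Variables l d : nat.

Definition host := {ffun 'I_l -> 'I_d}.
(* Switches: a layer k together with a vector in Z_d^(l-1). *)
Definition switch := ('I_l * {ffun 'I_l.-1 -> 'I_d})%type.
(* Vertices of the BCube digraph: hosts and switches (switches of different
   layers are distinct since the layer is part of the switch). *)
Definition vertex := (host + switch)%type.

Definition del_coord (k : 'I_l) (h : host) : {ffun 'I_l.-1 -> 'I_d} :=
  [ffun j => h (lift k j)].

Definition linked (h : host) (sw : switch) : bool := sw.2 == del_coord sw.1 h.

Definition bcube_arc : rel vertex := fun u v =>
  match u, v with
  | inl h, inr sw => linked h sw
  | inr sw, inl h => linked h sw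
  | _, _ => false
  end.

(* A directed path from a to b, given as the list of vertices after a:
   consecutive vertices are joined by arcs, ends at b, no repeated vertex. *)
Definition is_dpath (a b : vertex) (p : seq vertex) : bool :=
  [&& path bcube_arc a p, last a p == b & uniq (a :: p)].

Definition path_arcs (a : vertex) (p : seq vertex) : seq (vertex * vertex) :=
  zip (a :: p) p.

Definition routing := host -> host -> seq vertex.

Definition valid_routing (R : routing) : Prop :=
  forall hs hd : host, hs != hd -> is_dpath (inl hs) (inl hd) (R hs hd).

Definition load (R : routing) (u v : vertex) : nat :=
  #|[set x : host * host | (x.1 != x.2) &&
      ((u, v) \in path_arcs (inl x.1) (R x.1 x.2))]|.

Definition max_load (R : routing) : nat :=
  \max_(u : vertex) \max_(v : vertex | bcube_arc u v) load R u v.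

Definition forwarding_index_is (m : nat) : Prop :=
  (exists R : routing, valid_routing R /\ max_load R = m) /\
  (forall R : routing, valid_routing R -> m <= max_load R).

End BCube.

(* Main.v *)
Require Import Defs.
From mathcomp Require Import all_boot.
Set Implicit Arguments. Unset Strict Implicit. Unset Printing Implicit Defensive.

Definition ins (l d : nat) (k : 'I_l) (c : 'I_d) (s : {ffun 'I_l.-1 -> 'I_d}) : host l d :=
  [ffun j => if unlift k j is Some j' then s j' else c].

Lemma card_fix (l d : nat) (k : 'I_l) (c : 'I_d) :
  #|[set g : host l d | g k == c]| = d ^ l.-1.
Proof.
have inj : injective (ins k c).
  move=> s1 s2 /ffunP E; apply/ffunP => j; have := E (lift k j).
  by rewrite !ffunE liftK.
have -> : [set g : host l d | g k == c] = [set ins k c s | s in [set: {ffun 'I_l.-1 -> 'I_d}]].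
  apply/setP => g; rewrite inE; apply/eqP/imsetP.
    move=> gk; exists (del_coord k g); first by rewrite inE.
    apply/ffunP => j; rewrite !ffunE; case: unliftP => [j'|] ->; first by rewrite ffunE.
    by [].
  by move=> [s _ ->]; rewrite ffunE unlift_none.
by rewrite card_imset // cardsT card_ffun !card_ord.
Qed.

Lemma card_nfix (l d : nat) (k : 'I_l) (c : 'I_d) :
  #|[set g : host l d | g k != c]| = d ^ l - d ^ l.-1.
Proof.
have E := cardsC [set g : host l d | g k == c].
have -> : [set g : host l d | g k != c] = ~: [set g : host l d | g k == c].
  by apply/setP => g; rewrite !inE.
have T : #|{: host l d}| = d ^ l by rewrite card_ffun !card_ord.
by rewrite -(card_fix k c) -T -E addKn.
Qed.

Lemma card_pairs (l d : nat) (k : 'I_l) :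
  #|[set x : host l d * host l d | x.1 k != x.2 k]| = d ^ l * (d ^ l - d ^ l.-1).
Proof.
rewrite -sum1_card.
rewrite (eq_bigl (fun x : host l d * host l d => (x.1 \in predT) && (x.2 \in [set g : host l d | x.1 k != g k]))); last first.
  by move=> x; rewrite !inE.
rewrite -(pair_big_dep predT (fun (h : host l d) (g : host l d) => g \in [set g : host l d | h k != g k]) (fun _ _ => 1)) /=.
rewrite (eq_bigr (fun _ => d ^ l - d ^ l.-1)); last first.
  move=> h _; rewrite sum1_card.
  have -> : [set g : host l d | h k != g k] = [set g : host l d | g k != h k].
    by apply/setP => g; rewrite !inE eq_sym.
  exact: card_nfix.
by rewrite sum_nat_const card_ffun !card_ord.
Qed.

Lemma key (l d : nat) (i : 'I_l) n : forall (p : seq (vertex l d)) (hs hd : host l d),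
  size p <= n -> path (@bcube_arc l d) (inl hs) p -> last (inl hs) p = inl hd -> hs i != hd i ->
  exists h : host l d, (inl h, inr (i, del_coord i h)) \in path_arcs (inl hs) p.
Proof.
elim: n => [|n IH] [|v p] hs hd //=.
- by move=> _ _ [->]; rewrite eqxx.
- by move=> _ _ [->]; rewrite eqxx.
case: v => [h'|sw] //= sz /andP [lk pp] ll ne.
case: (eqVneq sw.1 i) => e.
  exists hs; rewrite /path_arcs /= inE; apply/orP; left.
  move: lk; rewrite /linked => /eqP; case: sw e {pp ll} => k s /= -> ->. by [].
case: p sz pp ll => [|w p] sz pp ll; first by [].
case: w sz pp ll => [h'|sw'] sz /=; last by [].
move=> /andP [lk' pp'] ll.
have eh : h' i = hs i.
  move: lk lk'; rewrite /linked => /eqP E /eqP E'.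
  case: (unliftP sw.1 i) e => [j ->|->]; last by rewrite eqxx.
  move=> _; have := congr1 (fun f : {ffun 'I_l.-1 -> 'I_d} => f j) (etrans (esym E') E).
  by rewrite !ffunE.
have [|h Hh] := IH p h' hd (ltnW sz) pp' ll; first by rewrite eh.
by exists h; rewrite /path_arcs /= !inE Hh !orbT.
Qed.

Lemma lower (l d : nat) (hl : 0 < l) (hd : 0 < d) (R : routing l d) :
  valid_routing R -> d ^ l - d ^ l.-1 <= max_load R.
Proof.
move=> vR; set i : 'I_l := Ordinal hl; set M := max_load R.
set S := fun h : host l d => [set x : host l d * host l d | (x.1 != x.2) &&
      ((inl h, inr (i, del_coord i h)) \in path_arcs (inl x.1) (R x.1 x.2))].
have SM : forall h, #|S h| <= M.
  move=> h; rewrite /M /max_load.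
  apply: leq_trans (leq_bigmax (inl h)).
  apply: (leq_trans _ (leq_bigmax_cond (inr (i, del_coord i h)) _)) => //.
  by rewrite /= /linked.
have sum1 : \sum_(h : host l d) #|S h| <= d ^ l * M.
  apply: (@leq_trans (\sum_(h : host l d) M)); first by apply: leq_sum => h _; exact: SM.
  by rewrite sum_nat_const cardT -cardE card_ffun !card_ord.
have sum2 : #|[set x : host l d * host l d | x.1 i != x.2 i]| <= \sum_(h : host l d) #|S h|.
  rewrite -sum1_card.
  have -> : \sum_(h : host l d) #|S h| =
     \sum_(h : host l d) \sum_(x : host l d * host l d) (if x \in S h then 1 else 0).
    by apply: eq_bigr => h _; rewrite -sum1_card big_mkcond.
  rewrite exchange_big /= big_mkcond /=.
  apply: leq_sum => x _; case: ifP => // /[!inE] ne.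
  have ne' : x.1 != x.2 by apply: contraNneq ne => ->.
  have := vR _ _ ne'; case/and3P => pp /eqP ll _.
  have [h Hh] := @key l d i (size (R x.1 x.2)) _ _ _ (leqnn _) pp ll ne.
  rewrite (bigD1 h) //= inE ne' Hh; exact: leq_addr.
have := leq_trans sum2 sum1.
by rewrite card_pairs leq_pmul2l // expn_gt0 hd.
Qed.

Definition mix (l d : nat) (k : nat) (a b : host l d) : host l d :=
  [ffun j : 'I_l => if val j < k then b j else a j].

Definition step (l d : nat) (hs hd : host l d) (k : nat) : seq (vertex l d) :=
  oapp (fun o : 'I_l => if hs o != hd o then
          [:: inr (o, del_coord o (mix k hs hd)); inl (mix k.+1 hs hd)] else [::])
       [::] (insub k).

Definition gen (l d : nat) (hs hd : host l d) (m n : nat) : seq (vertex l d) :=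
  flatten [seq step hs hd k | k <- iota m n].

Definition Rt (l d : nat) : routing l d := fun hs hd => gen hs hd 0 l.

Lemma stepP (l d : nat) (hs hd : host l d) (k : nat) :
  (step hs hd k = [::] /\ mix k.+1 hs hd = mix k hs hd) \/
  (exists o : 'I_l, [/\ val o = k, hs o != hd o &
     step hs hd k = [:: inr (o, del_coord o (mix k hs hd)); inl (mix k.+1 hs hd)]]).
Proof.
rewrite /step; case: insubP => [o _ ko | nk] /=.
  case: (eqVneq (hs o) (hd o)) => e /=; last by right; exists o.
  left; split => //; apply/ffunP => j; rewrite !ffunE ltnS leq_eqVlt.
  case: (eqVneq (val j) k) => //= jk; rewrite jk ltnn.
  by have -> : j = o by apply: val_inj; rewrite /= jk ko.
left; split => //; apply/ffunP => j; rewrite !ffunE ltnS leq_eqVlt.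
case: (eqVneq (val j) k) => //= jk.
by move: nk; rewrite -jk ltn_ord.
Qed.

Lemma genS (l d : nat) (hs hd : host l d) m n :
  gen hs hd m n.+1 = step hs hd m ++ gen hs hd m.+1 n.
Proof. by []. Qed.

Lemma mix0 (l d : nat) (hs hd : host l d) : mix 0 hs hd = hs.
Proof. by apply/ffunP => j; rewrite ffunE. Qed.

Lemma mixl (l d : nat) (hs hd : host l d) : mix l hs hd = hd.
Proof. by apply/ffunP => j; rewrite ffunE ltn_ord. Qed.

Lemma gen_path (l d : nat) (hs hd : host l d) n : forall m,
  path (@bcube_arc l d) (inl (mix m hs hd)) (gen hs hd m n) /\
  last (inl (mix m hs hd)) (gen hs hd m n) = inl (mix (m + n) hs hd).
Proof.
elim: n => [|n IH] m; first by rewrite addn0.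
rewrite genS; case: (stepP hs hd m) => [[-> E] | [o [ko ne ->]]] /=.
  by rewrite -E -addSnnS; exact: IH.
have [p1 p2] := IH m.+1; rewrite -addSnnS p2 p1 /= /linked /= eqxx andbT /=.
split => //; apply/eqP/ffunP => j; rewrite !ffunE.
have H : val (lift o j) != m by rewrite -ko; apply/eqP => /val_inj /esym /eqP; rewrite (negPf (neq_lift o j)).
by rewrite [_ < m.+1]ltnS [val (lift o j) <= m]leq_eqVlt (negPf H).
Qed.

Lemma mix_neq (l d : nat) (hs hd : host l d) a b (o : 'I_l) :
  a <= o < b -> hs o != hd o -> mix a hs hd != mix b hs hd.
Proof.
case/andP => ao ob ne; apply/eqP => /ffunP /(_ o); rewrite !ffunE ob.
by rewrite ltnNge ao /= => E; rewrite E eqxx in ne.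
Qed.

Lemma gen_mem (l d : nat) (hs hd : host l d) n : forall m v, v \in gen hs hd m n ->
  (exists o : 'I_l, [/\ m <= o, hs o != hd o & v = inl (mix o.+1 hs hd)]) \/
  (exists o : 'I_l, m <= o /\ exists s, v = inr (o, s)).
Proof.
elim: n => [|n IH] m v //; rewrite genS mem_cat.
case: (stepP hs hd m) => [[-> E] | [o [ko ne ->]]] /=.
  move=> /IH [[o [mo ne ->]]|[o [mo [s ->]]]]; [left|right]; exists o; split => //; try exact: (ltnW mo).
  by exists s.
rewrite !inE; case/orP; [case/orP => /eqP ->|].
- by right; exists o; split; [rewrite ko | exists (del_coord o (mix m hs hd))].
- by left; exists o; split; rewrite ?ko.
move=> /IH [[o' [mo ne' ->]]|[o' [mo [s ->]]]]; [left|right]; exists o'; split => //; try exact: (ltnW mo).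
by exists s.
Qed.

Lemma gen_uniq (l d : nat) (hs hd : host l d) n : forall m,
  uniq (inl (mix m hs hd) :: gen hs hd m n).
Proof.
elim: n => [|n IH] m //; rewrite genS.
case: (stepP hs hd m) => [[-> E] | [o [ko ne ->]]] /=.
  by rewrite -E; exact: IH.
have := IH m.+1; rewrite /= => /andP [-> ->]; rewrite !andbT !inE /=.
apply/andP; split; last first.
  apply/negP => /(gen_mem) [[o' [mo _ ]]|[o' [mo [s [E1 E2]]]]] //.
  by move: mo; rewrite -E1 ko ltnn.
rewrite negb_or; apply/andP; split.
  apply/negP => /eqP [] /eqP; apply/negP; apply: (mix_neq (o:=o)) => //.
  by rewrite ko leqnn ltnSn.
apply/negP => /gen_mem [[o' [mo ne' []]]|[o' [mo [s E]]]] //.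
move=> /eqP; apply/negP; apply: (mix_neq (o:=o')) => //.
by rewrite ltnSn andbT; apply: leq_trans mo.
Qed.

Lemma gen_arcs (l d : nat) (hs hd : host l d) n : forall m a,
  a \in path_arcs (inl (mix m hs hd)) (gen hs hd m n) ->
  exists o : 'I_l, hs o != hd o /\
    (a = (inl (mix o hs hd), inr (o, del_coord o (mix o hs hd))) \/
     a = (inr (o, del_coord o (mix o hs hd)), inl (mix o.+1 hs hd))).
Proof.
elim: n => [|n IH] m a //; rewrite genS.
case: (stepP hs hd m) => [[-> E] | [o [ko ne ->]]] /=.
  by rewrite -E; exact: IH.
rewrite /path_arcs /= !inE -/(path_arcs _ _).
case/orP => [/eqP ->|]; first by exists o; split => //; left; rewrite ko.
case/orP => [/eqP ->|]; first by exists o; split => //; right; rewrite ko.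
exact: IH.
Qed.

Lemma card_inj (l d : nat) (k : nat) (o : 'I_l) (h : host l d) :
  #|[set x : host l d * host l d | (h == mix k x.1 x.2) && (x.1 o != x.2 o)]|
    <= d ^ l - d ^ l.-1.
Proof.
set T := [set x : host l d * host l d | _].
rewrite -(card_in_imset (f := fun x : host l d * host l d => mix k x.2 x.1)); last first.
  move=> [a1 b1] [a2 b2]; rewrite !inE /= => /andP [/eqP E1 _] /andP [/eqP E2 _] E.
  have F j : mix k b1 a1 j = mix k b2 a2 j by rewrite E.
  have G j : mix k a1 b1 j = mix k a2 b2 j by rewrite -E1 -E2.
  congr pair; apply/ffunP => j; have := F j; have := G j; rewrite !ffunE;
    by case: ifP.
rewrite -(card_nfix o (h o)); apply: subset_leq_card.
apply/subsetP => g /imsetP [[a b]]; rewrite !inE /= => /andP [/eqP -> ne] ->.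
by rewrite !ffunE; case: ifP => _ //; rewrite eq_sym.
Qed.

Lemma upper (l d : nat) : max_load (@Rt l d) <= d ^ l - d ^ l.-1.
Proof.
apply/bigmax_leqP => u _; apply/bigmax_leqP => v _.
have arc : forall x : host l d * host l d, (u, v) \in path_arcs (inl x.1) (Rt x.1 x.2) ->
  exists o : 'I_l, x.1 o != x.2 o /\
    ((u, v) = (inl (mix o x.1 x.2), inr (o, del_coord o (mix o x.1 x.2))) \/
     (u, v) = (inr (o, del_coord o (mix o x.1 x.2)), inl (mix o.+1 x.1 x.2))).
  by move=> x; rewrite /Rt -{1}(mix0 x.1 x.2); exact: gen_arcs.
rewrite /load.
case: u arc => [h|sw] arc; case: v arc => [h2|s2] arc.
- apply: leq_trans (_ : 0 <= _) => //; rewrite leqn0 cards_eq0; apply/eqP/setP => x.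
  rewrite !inE; apply/negP => /andP [_ /arc [o [_ [E|E]]]]; discriminate E.
- apply: leq_trans (card_inj s2.1 s2.1 h); apply: subset_leq_card; apply/subsetP => x.
  rewrite !inE => /andP [_ /arc [o [ne [[-> ->]|E]]]]; last discriminate E.
  by rewrite eqxx.
- apply: leq_trans (card_inj sw.1.+1 sw.1 h2); apply: subset_leq_card; apply/subsetP => x.
  rewrite !inE => /andP [_ /arc [o [ne [E|[-> ->]]]]]; first discriminate E.
  by rewrite eqxx.
- apply: leq_trans (_ : 0 <= _) => //; rewrite leqn0 cards_eq0; apply/eqP/setP => x.
  rewrite !inE; apply/negP => /andP [_ /arc [o [_ [E|E]]]]; discriminate E.
Qed.

Lemma Rt_valid (l d : nat) : valid_routing (@Rt l d).
Proof.
move=> hs hd _; rewrite /is_dpath /Rt.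
have [p1 p2] := gen_path hs hd l 0; have u := gen_uniq hs hd l 0.
by rewrite mix0 add0n mixl in p1 p2 u; rewrite p1 p2 eqxx u.
Qed.

Theorem theorem1 (l d : nat) (hl : 0 < l) (hd : 0 < d) :
  forwarding_index_is l d (d ^ l - d ^ l.-1).
Proof.
split; last by move=> R vR; exact: lower.
exists (@Rt l d); split; first exact: Rt_valid.
by apply/eqP; rewrite eqn_leq upper lower //; exact: Rt_valid.
Qed.
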